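(* Let $G$ be a topological group and let $H$ and $K$ be open subgroups of $G$ which are Hecke subgroups of $G$ and are commensurable. Then the discrete Hecke pair $(G,H)$ has property (RD) if and only if the discrete Hecke pair $(G,K)$ has property (RD).
   Context: $H$ is a Hecke subgroup of $G$ if $[H:H\cap xHx^{-1}]<\infty$ for all $x\in G$; $H,K$ are commensurable if $H\cap K$ has finite index in both. For a discrete Hecke pair $(G,H)$, the Hecke algebra $\mathcal H(G,H)$ consists of finitely supported functions $f$ on $H\backslash G$ which are right $H$-invariant ($f(Hxh)=f(Hx)$), with product $f*g(Hx)=\sum_{Hy\in H\backslash G}f(Hxy^{-1})g(Hy)$; the left regular representation $\lambda$ acts on $\ell^2(H\backslash G)$ by $\lambda(f)\xi=f*\xi$. A length function on $(G,H)$ is a Borel function $l:G\to[0,\infty)$ with $l(e)=0$, $l(g)=l(g^{-1})$, $l(gh)\le l(g)+l(h)$ and $l|_H=0$ (so $l$ is bi-$H$-invariant). $(G,H)$ has property (RD) if there are a length function $l$ on $(G,H)$ and $s,c>0$ such that $\|\lambda(f)\|\le c\big(\sum_{Hx\in H\backslash G}|f(Hx)|^2(1+l(x))^{2s}\big)^{1/2}$ for all $f\in\mathcal H(G,H)$. *)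

(* Defs.v *)
From HB Require Import structures.
From mathcomp Require Import all_boot all_order all_algebra.
From mathcomp Require Import all_classical all_reals all_analysis.
From mathcomp.real_closed Require Import complex.

Set Implicit Arguments.
Unset Strict Implicit.
Unset Printing Implicit Defensive.

Import Order.TTheory GRing.Theory Num.Theory numFieldNormedType.Exports.
Local Open Scope classical_set_scope.
Local Open Scope ring_scope.

Section GroupDefs.
Variables (G : Type) (mul : G -> G -> G) (inv : G -> G) (e : G).

Definition is_group : Prop :=
  [/\ forall x y z, mul x (mul y z) = mul (mul x y) z,
      forall x, mul e x = x /\ mul x e = x
    & forall x, mul (inv x) x = e /\ mul x (inv x) = e].

Definition is_subgroup (H : set G) : Prop :=
  H e /\ (forall x y, H x -> H y -> H (mul x (inv y))).

Definition rcoset (H : set G) (x : G) : set G := [set mul h x | h in H].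
Definition lcoset (x : G) (K : set G) : set G := [set mul x k | k in K].
Definition conjset (x : G) (H : set G) : set G :=
  [set mul (mul x h) (inv x) | h in H].

Definition finite_index (H K : set G) : Prop :=
  finite_set [set lcoset a K | a in H].

Definition hecke_subgroup (H : set G) : Prop :=
  is_subgroup H /\ forall x, finite_index H (H `&` conjset x H).

Definition commensurable (H K : set G) : Prop :=
  finite_index H (H `&` K) /\ finite_index K (H `&` K).

End GroupDefs.

Definition is_topological_group (G : topologicalType)
    (mul : G -> G -> G) (inv : G -> G) (e : G) : Prop :=
  [/\ is_group mul inv e,
      continuous (fun p : G * G => mul p.1 p.2)
    & continuous inv].

(* Functions on H\G are represented as left-H-invariant functions on G; *)
(* sums over H\G are sums over a fixed transversal (one representative *)
(* per right coset Hx).                                                 *)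
Section HeckeDefs.
Variables (R : realType) (G : topologicalType).
Variables (mul : G -> G -> G) (inv : G -> G) (e : G) (H : set G).

Local Notation C := (R[i]).

Definition coset_rep (x : G) : G := xget e (rcoset mul H x).

Definition transversal : set G := [set coset_rep x | x in [set: G]].

Definition left_inv (T : Type) (f : G -> T) : Prop :=
  forall h x, H h -> f (mul h x) = f x.

Definition hecke_elem (f : G -> C) : Prop :=
  [/\ left_inv f,
      (forall h x, H h -> f (mul x h) = f x)
    & finite_set [set rcoset mul H x | x in [set x | f x != 0]]].

Definition l2sq (xi : G -> C) : \bar R :=
  (\esum_(y in transversal) ((Normc.normc (xi y)) ^+ 2)%:E)%E.

Definition in_l2 (xi : G -> C) : Prop := left_inv xi /\ (l2sq xi < +oo)%E.

(* lambda(f) xi = f * xi,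
   (f * xi)(Hx) = sum_{Hy in H\G} f(H x y^-1) xi(Hy)
   (for f in the Hecke algebra and H Hecke, only finitely many terms
   are nonzero) *)
Definition hconv (f xi : G -> C) : G -> C :=
  fun x => \sum_(y \in transversal) f (mul x (inv y)) * xi y.

Definition length_function (l : G -> R) : Prop :=
  [/\ (forall x, 0 <= l x) /\ l e = 0,
      (forall x, l x = l (inv x)),
      (forall x y, l (mul x y) <= l x + l y),
      (forall h, H h -> l h = 0)
    &
      forall B : set R, open B ->
        (<<s [set: G], @open G >>) (l @^-1` B)].

Definition weighted_norm (l : G -> R) (s : R) (f : G -> C) : R :=
  Num.sqrt (\sum_(x \in transversal)
              (Normc.normc (f x)) ^+ 2 * powR (1 + l x) (2 * s)).

(* property (RD) for the discrete Hecke pair (G,H):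
   || lambda(f) || <= c * weighted_norm, written out through the operator
   norm on l^2(H\G):  ||f * xi||^2 <= (c * weighted_norm)^2 ||xi||^2 *)
Definition property_RD : Prop :=
  exists l : G -> R, length_function l /\
  exists s c : R, 0 < s /\ 0 < c /\
    forall f : G -> C, hecke_elem f ->
    forall xi : G -> C, in_l2 xi ->
      (l2sq (hconv f xi) <= ((c * weighted_norm l s f) ^+ 2)%:E * l2sq xi)%E.

End HeckeDefs.

(* Main.v *)
Require Import Defs.
From HB Require Import structures.
From mathcomp Require Import all_boot all_order all_algebra.
From mathcomp Require Import all_classical all_reals all_analysis.
From mathcomp.real_closed Require Import complex.
From mathcomp Require Import ring lra.

Set Implicit Arguments.
Unset Strict Implicit.
Unset Printing Implicit Defensive.
Import Order.TTheory GRing.Theory Num.Theory numFieldNormedType.Exports.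
Local Open Scope classical_set_scope.
Local Open Scope ring_scope.

Section Grp.
Variables (G : topologicalType) (mul : G -> G -> G) (inv : G -> G) (e : G).
Hypothesis Hg : is_group mul inv e.
Local Notation "x ** y" := (mul x y) (at level 40, left associativity).

Lemma gA x y z : x ** (y ** z) = x ** y ** z.
Proof. by case: Hg. Qed.
Lemma g1x x : e ** x = x. Proof. by case: Hg => _ /(_ x) []. Qed.
Lemma gx1 x : x ** e = x. Proof. by case: Hg => _ /(_ x) []. Qed.
Lemma gVx x : inv x ** x = e. Proof. by case: Hg => _ _ /(_ x) []. Qed.
Lemma gxV x : x ** inv x = e. Proof. by case: Hg => _ _ /(_ x) []. Qed.
Lemma gKV x y : inv x ** (x ** y) = y. Proof. by rewrite gA gVx g1x. Qed.
Lemma gVK x y : x ** (inv x ** y) = y. Proof. by rewrite gA gxV g1x. Qed.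
Lemma gKVr x y : x ** y ** inv y = x. Proof. by rewrite -gA gxV gx1. Qed.
Lemma gVKr x y : x ** inv y ** y = x. Proof. by rewrite -gA gVx gx1. Qed.
Lemma g_inv_uniq x y : x ** y = e -> y = inv x.
Proof. by move=> h; rewrite -(gKV x y) h gx1. Qed.
Lemma ginvK x : inv (inv x) = x.
Proof. exact: (esym (g_inv_uniq (gVx x))). Qed.
Lemma ginvM x y : inv (x ** y) = inv y ** inv x.
Proof.
by apply/esym/g_inv_uniq; rewrite -gA (gA y) gxV g1x gxV.
Qed.
Lemma ginv1 : inv e = e.
Proof. exact: (esym (g_inv_uniq (g1x e))). Qed.
Lemma gcancl x y z : x ** y = x ** z -> y = z.
Proof. by move=> h; rewrite -(gKV x y) h gKV. Qed.
Lemma gcancr x y z : y ** x = z ** x -> y = z.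
Proof. by move=> h; rewrite -(gKVr y x) h gKVr. Qed.

Section Sub.
Variable S : set G.
Hypothesis sS : is_subgroup mul inv e S.
Lemma sub1 : S e. Proof. by case: sS. Qed.
Lemma subV x : S x -> S (inv x).
Proof. by case: sS => h1 h2 Sx; have := h2 _ _ h1 Sx; rewrite g1x. Qed.
Lemma subM x y : S x -> S y -> S (x ** y).
Proof.
by case: sS => h1 h2 Sx Sy; have := h2 _ _ Sx (subV Sy); rewrite ginvK.
Qed.
Lemma subMV x y : S x -> S y -> S (x ** inv y).
Proof. by move=> Sx Sy; apply: subM => //; apply: subV. Qed.
Lemma subVM x y : S x -> S y -> S (inv x ** y).
Proof. by move=> Sx Sy; apply: subM => //; apply: subV. Qed.

Lemma rcoset_eq x y : S (x ** inv y) -> rcoset mul S x = rcoset mul S y.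
Proof.
move=> Sxy; apply/seteqP; split=> z [h Sh <-].
  by exists (h ** (x ** inv y)); [apply: subM|rewrite -!gA gVx gx1].
exists (h ** inv (x ** inv y)); first by apply: subM => //; apply: subV.
by rewrite ginvM ginvK -!gA gVx gx1.
Qed.

Local Notation rep := (coset_rep mul e S).
Local Notation Tr := (Defs.transversal mul e S).

Lemma rep_in x : exists2 h, S h & rep x = h ** x.
Proof.
have : rcoset mul S x (rep x).
  by apply: (@xgetI _ e _ x); exists e; [apply: sub1|rewrite g1x].
by case=> h Sh <-; exists h.
Qed.
Lemma rep_rel x : S (rep x ** inv x).
Proof. by case: (rep_in x) => h Sh ->; rewrite gKVr. Qed.
Lemma rep_relV x : S (x ** inv (rep x)).
Proof. by have := subV (rep_rel x); rewrite ginvM ginvK. Qed.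
Lemma rep_eq x y : S (x ** inv y) -> rep x = rep y.
Proof. by move=> h; rewrite /coset_rep (rcoset_eq h). Qed.
Lemma rep_eqP x y : rep x = rep y -> S (x ** inv y).
Proof.
move=> h; have := subM (rep_relV x) (rep_rel y).
by rewrite h -gA gKV.
Qed.
Lemma rep_idem x : rep (rep x) = rep x.
Proof. exact/rep_eq/rep_rel. Qed.
Lemma repM h x : S h -> rep (h ** x) = rep x.
Proof. by move=> Sh; apply: rep_eq; rewrite gKVr. Qed.
Lemma TrP y : Tr y <-> rep y = y.
Proof.
split; first by case=> x _ <-; rewrite rep_idem.
by move=> h; exists y.
Qed.
Lemma Tr_rep x : Tr (rep x). Proof. by exists x. Qed.
Lemma Tr_uniq y y' : Tr y -> Tr y' -> S (y ** inv y') -> y = y'.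
Proof. by move=> /TrP {2}<- /TrP {2}<-; apply: rep_eq. Qed.
Lemma linv_rep (T : Type) (g : G -> T) x : left_inv mul S g -> g (rep x) = g x.
Proof. by move=> gi; case: (rep_in x) => h Sh ->; apply: gi. Qed.

End Sub.
End Grp.

Lemma fsbig_ordT (R : Type) (idx : R) (op : Monoid.com_law idx) n (F : 'I_n -> R) :
  \big[op/idx]_(i \in [set: 'I_n]) F i = \big[op/idx]_(i < n) F i.
Proof.
rewrite (@bigfs R idx op _ (index_enum 'I_n) xpredT F).
- by congr (\big[_/_]_(_ \in _) _); apply/seteqP; split=> x //=.
- by rewrite /index_enum -enumT enum_uniq.
- by move=> i _; rewrite mem_index_enum.
Qed.

Lemma esum_ordT (R : realType) n (F : 'I_n -> \bar R) :
  (forall i, 0 <= F i)%E -> \esum_(i in [set: 'I_n]) F i = \sum_(i < n) F i.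
Proof.
by move=> F0; rewrite esum_fset ?fsbig_ordT //; exact: finite_finset.
Qed.

Section Fiber.
Variables (G : topologicalType) (mul : G -> G -> G) (inv : G -> G) (e : G).
Hypothesis Hg : is_group mul inv e.
Local Notation "x ** y" := (mul x y) (at level 40, left associativity).
Variables (H L : set G).
Hypotheses (sH : is_subgroup mul inv e H) (sL : is_subgroup mul inv e L).
Hypothesis LH : L `<=` H.
Variables (n : nat) (a : 'I_n -> G).
Hypothesis aH : forall i, H (a i).
Hypothesis acov : forall h, H h -> exists i, L (h ** inv (a i)).
Hypothesis adist : forall i j, L (a i ** inv (a j)) -> i = j.

Local Notation repH := (coset_rep mul e H).
Local Notation repL := (coset_rep mul e L).
Local Notation TrH := (Defs.transversal mul e H).
Local Notation TrL := (Defs.transversal mul e L).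

Lemma a0 : exists i0, L (a i0).
Proof.
case: (acov (sub1 sH)) => i; rewrite (g1x Hg) => /(subV Hg sL).
by rewrite (ginvK Hg); exists i.
Qed.

Lemma perm_ex h : H h ->
  exists2 s : 'I_n -> 'I_n, injective s & forall i, L (a i ** h ** inv (a (s i))).
Proof.
move=> Hh.
have ex i : exists j, L (a i ** h ** inv (a j)).
  by apply: acov; apply: (subM Hg sH) => //.
case: (boolp.choice ex) => s hs; exists s => // i i' eqs.
apply: adist; have := subM Hg sL (hs i) (subV Hg sL (hs i')).
by rewrite eqs !(ginvM Hg) !(ginvK Hg) -!(gA Hg) (gKV Hg) (gVK Hg).
Qed.

Definition phi (p : G * 'I_n) := repL (a p.2 ** p.1).

Lemma phi_bij : set_bij (TrH `*` [set: 'I_n]) TrL phi.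
Proof.
split.
- by move=> p _; apply: Tr_rep.
- move=> [y i] [y' j] /set_mem [Ty _] /set_mem [Ty' _] /= eqp; rewrite /= in Ty Ty'.
  have := rep_eqP Hg sL eqp; rewrite (ginvM Hg) => Lij.
  have Hyy : H (y ** inv y').
    have := subM Hg sH (subM Hg sH (subV Hg sH (aH i)) (LH Lij)) (aH j).
    by rewrite -!(gA Hg) (gKV Hg) (gVx Hg) (gx1 Hg).
  have eyy := Tr_uniq Hg sH Ty Ty' Hyy; subst y'.
  by move: Lij; rewrite /= -!(gA Hg) (gVK Hg) => /adist /= ->.
- move=> z Tz; case: (rep_in Hg sH z) => h Hh ez.
  case: (acov (subV Hg sH Hh)) => i Li.
  exists (repH z, i); first by split=> //; apply: Tr_rep.
  rewrite /phi /=; transitivity (repL z); last exact: (proj1 (TrP Hg sL z) Tz).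
  apply: (rep_eq Hg sL) => /=.
  rewrite ez -!(gA Hg) (gxV Hg) (gx1 Hg).
  by have := subV Hg sL Li; rewrite (ginvM Hg) !(ginvK Hg).
Qed.

Lemma sumE_fiber (R : realType) (g : G -> \bar R) :
  (forall z, 0 <= g z)%E -> left_inv mul L g ->
  \esum_(z in TrL) g z = \esum_(y in TrH) \sum_(i < n) g (a i ** y).
Proof.
move=> g0 gi; rewrite (reindex_esum _ _ _ _ phi_bij).
transitivity (\esum_(p in TrH `*` [set: 'I_n]) g (a p.2 ** p.1)).
  by apply: eq_esum => p _; rewrite /phi (linv_rep Hg sL).
rewrite -(@esum_esum R _ _ TrH (fun _ => [set: 'I_n]) (fun y i => g (a i ** y))) //.
by apply: eq_esum => y _; rewrite esum_ordT.
Qed.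

End Fiber.

Section Analytic.
Variable R : realType.
Local Notation nc := (@Normc.normc R).

Lemma nc_ge0 (z : R[i]) : 0 <= nc z.
Proof. by case: z => x y; apply: sqrtr_ge0. Qed.

Lemma ncC (r : R) : 0 <= r -> nc (r%:C)%C = r.
Proof.
move=> r0; rewrite /Normc.normc /= expr0n /= addr0 sqrtr_sqr.
exact: ger0_norm.
Qed.

Lemma nc_sum (I : Type) (s : seq I) (P : pred I) (F : I -> R[i]) :
  nc (\sum_(i <- s | P i) F i) <= \sum_(i <- s | P i) nc (F i).
Proof.
elim: s => [|x s IH]; first by rewrite !big_nil Normc.normc0.
rewrite !big_cons; case: ifP => // _.
apply: le_trans (le_normcD _ _) _; exact: lerD.
Qed.

Lemma nc_eq0 (z : R[i]) : (nc z == 0) = (z == 0).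
Proof.
apply/eqP/eqP => [/Normc.eq0_normc //|->]; exact: Normc.normc0.
Qed.

Lemma FE (T : choiceType) (P : set T) (r : T -> R) :
  (forall x, P x -> 0 <= r x) ->
  finite_set (P `&` [set x | r x != 0]) ->
  ((\sum_(x \in P) r x)%:E = \esum_(x in P) (r x)%:E)%E.
Proof.
move=> r0 fin.
have E : r @^-1` [set~ 0] = [set x | r x != 0].
  by apply/seteqP; split => x /= /eqP.
rewrite fsbig_supp E -fsumEFin // -esum_fset //; last first.
  by move=> i /set_mem [/r0 ?] _; rewrite lee_fin.
rewrite [RHS](esumID [set x | r x != 0]); last by move=> i /r0; rewrite lee_fin.
rewrite [X in (_ = _ + X)%E]esum1 ?adde0 //.
by move=> i [_ /=] /negP; rewrite negbK => /eqP ->.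
Qed.

Lemma nc_fsum_le (T : choiceType) (P : set T) (F : T -> R[i]) :
  ((nc (\sum_(x \in P) F x))%:E <= \esum_(x in P) (nc (F x))%:E)%E.
Proof.
have [fin|inf] := pselect (finite_set (P `&` F @^-1` [set~ 0])); last first.
  rewrite fsbig_dflt // Normc.normc0.
  by apply: esum_ge0 => x _; rewrite lee_fin nc_ge0.
apply: esum_ge; exists (P `&` F @^-1` [set~ 0]).
  by split => // x [].
rewrite fsumEFin // fsbig_supp lee_fin !fsbig_finite //.
  exact: nc_sum.
Qed.

End Analytic.

Lemma two_mul_le (R : realFieldType) (x y : R) : 2 * (x * y) <= x ^+ 2 + y ^+ 2.
Proof.
rewrite -subr_ge0 (_ : _ - _ = (x - y) ^+ 2); first exact: sqr_ge0.
by rewrite sqrrB; ring.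
Qed.
Lemma CS_sum (R : realFieldType) n (u : 'I_n -> R) :
  (\sum_(i < n) u i) ^+ 2 <= n%:R * \sum_(i < n) u i ^+ 2.
Proof.
set S2 := \sum_(i < n) u i ^+ 2.
have key : 2 * (\sum_(i < n) u i) ^+ 2 <= 2 * (n%:R * S2).
  rewrite expr2 mulr_suml mulr_sumr.
  apply: (@le_trans _ _ (\sum_(i < n) \sum_(j < n) (u i ^+ 2 + u j ^+ 2))).
    apply: ler_sum => i _; rewrite mulr_sumr mulr_sumr; apply: ler_sum => j _.
    exact: two_mul_le.
  have E1 i : \sum_(j < n) (u i ^+ 2 + u j ^+ 2) = u i ^+ 2 *+ n + S2.
    by rewrite big_split /= sumr_const card_ord.
  rewrite (eq_bigr _ (fun i _ => E1 i)) big_split /= sumrMnl sumr_const card_ord.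
  rewrite -/S2 -[S2 *+ n]mulr_natl -[_ + _]mulr2n -[_ *+ 2]mulr_natl.
  by [].
by rewrite ler_pM2l // in key.
Qed.

Section Cosets.
Variables (G : topologicalType) (mul : G -> G -> G) (inv : G -> G) (e : G).
Hypothesis Hg : is_group mul inv e.
Local Notation "x ** y" := (mul x y) (at level 40, left associativity).
Variable S : set G.
Hypothesis sS : is_subgroup mul inv e S.
Local Notation rep := (coset_rep mul e S).
Local Notation Tr := (Defs.transversal mul e S).

Lemma cosets_fin (T : eqType) (f : G -> T) (z0 : T) : left_inv mul S f ->
  finite_set [set rcoset mul S x | x in [set x | f x != z0]] <->
  finite_set (Tr `&` [set x | f x != z0]).
Proof.
move=> fi; split=> fin.
  apply: sub_finite_set (finite_image (xget e) fin) => y [Ty fy].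
  exists (rcoset mul S y); first by exists y.
  by have := proj1 (TrP Hg sS y) Ty.
apply: sub_finite_set (finite_image (rcoset mul S) fin) => C [x fx <-].
exists (rep x); first by split; [apply: Tr_rep|rewrite /= (linv_rep Hg sS)].
exact: (rcoset_eq Hg sS (rep_rel Hg sS x)).
Qed.

Lemma esum_rtrans (R : realType) (g : G -> \bar R) b :
  (forall z, 0 <= g z)%E -> left_inv mul S g ->
  \esum_(z in Tr) g (z ** b) = \esum_(z in Tr) g z.
Proof.
move=> g0 gi.
have bij : set_bij Tr Tr (fun z => rep (z ** b)).
  split.
  - by move=> z _; apply: Tr_rep.
  - move=> z z' /set_mem Tz /set_mem Tz' /(rep_eqP Hg sS).
    rewrite (ginvM Hg) -!(gA Hg) (gVK Hg) => Szz.
    exact: (Tr_uniq Hg sS Tz Tz' Szz).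
  - move=> w Tw; exists (rep (w ** inv b)); first exact: Tr_rep.
    transitivity (rep w); last exact: (proj1 (TrP Hg sS w) Tw).
    apply: (rep_eq Hg sS).
    case: (rep_in Hg sS (w ** inv b)) => h Sh ->.
    by rewrite -!(gA Hg) (gKV Hg) (gxV Hg) (gx1 Hg).
rewrite [RHS](reindex_esum _ _ _ _ bij).
by apply: eq_esum => z _; rewrite (linv_rep Hg sS).
Qed.

End Cosets.

Section HeckeFin.
Variables (G : topologicalType) (mul : G -> G -> G) (inv : G -> G) (e : G).
Hypothesis Hg : is_group mul inv e.
Local Notation "x ** y" := (mul x y) (at level 40, left associativity).
Variable H : set G.
Hypothesis sH : is_subgroup mul inv e H.
Hypothesis hH : forall c, finite_index mul H (H `&` conjset mul inv c H).
Local Notation rep := (coset_rep mul e H).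
Local Notation Tr := (Defs.transversal mul e H).

Lemma hecke_fin (T : eqType) (f : G -> T) (z0 : T) : left_inv mul H f ->
  finite_set (Tr `&` [set x | f x != z0]) ->
  forall x, finite_set (Tr `&` [set y | f (x ** inv y) != z0]).
Proof.
move=> fi fin x.
pose psi c (C : set G) := rep (inv c ** inv (xget e C) ** x).
apply: (sub_finite_set _ (bigcup_finite fin (fun c _ => finite_image (psi c) (hH c)))).
move=> y [Ty fy].
set c := rep (x ** inv y).
exists c; first by split; [apply: Tr_rep|rewrite /= (linv_rep Hg sH)].
case: (rep_in Hg sH (x ** inv y)) => h0 Hh0 ec.
set M := H `&` conjset mul inv c H.
set C := lcoset mul (inv h0) M.
exists C; first by exists (inv h0) => //; apply: (subV Hg sH).
have : C (xget e C).
  apply: (@xgetI _ e _ (inv h0)); exists e; last by rewrite (gx1 Hg).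
  split; first exact: (sub1 sH).
  by exists e; [exact: (sub1 sH)|rewrite (gx1 Hg) (gxV Hg)].
case=> m [Hm [h' Hh' em]] eb.
rewrite /psi -eb.
transitivity (rep y); last exact: (proj1 (TrP Hg sH y) Ty).
apply: (rep_eq Hg sH).
have exy : x ** inv y = inv h0 ** c by rewrite /c ec (gKV Hg).
rewrite -(gA Hg _ x) exy -em.
rewrite !(ginvM Hg) !(ginvK Hg) -!(gA Hg).
rewrite (gKV Hg) (gVK Hg) (gVx Hg) (gx1 Hg).
exact: (subV Hg sH).
Qed.

End HeckeFin.

Section LenLemmas.
Variables (R : realType) (G : topologicalType) (mul : G -> G -> G) (inv : G -> G) (e : G).
Hypothesis Hg : is_group mul inv e.
Local Notation "x ** y" := (mul x y) (at level 40, left associativity).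
Variable S : set G.
Hypothesis sS : is_subgroup mul inv e S.
Variable l : G -> R.
Hypothesis lsub : forall x y, l (x ** y) <= l x + l y.
Hypothesis lS : forall h, S h -> l h = 0.

Lemma len_l h x : S h -> l (h ** x) = l x.
Proof.
move=> Sh; apply/le_anti/andP; split.
  by apply: le_trans (lsub _ _) _; rewrite lS // add0r.
have {1}-> : x = inv h ** (h ** x) by rewrite (gKV Hg).
by apply: le_trans (lsub _ _) _; rewrite (lS (subV Hg sS Sh)) add0r.
Qed.

Lemma len_r h x : S h -> l (x ** h) = l x.
Proof.
move=> Sh; apply/le_anti/andP; split.
  by apply: le_trans (lsub _ _) _; rewrite (lS Sh) addr0.
have {1}-> : x = x ** h ** inv h by rewrite (gKVr Hg).
by apply: le_trans (lsub _ _) _; rewrite (lS (subV Hg sS Sh)) addr0.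
Qed.

End LenLemmas.

Lemma fsum_C (R : realType) (T : choiceType) (A : set T) (g : T -> R) :
  \sum_(y \in A) ((g y)%:C)%C = ((\sum_(y \in A) g y)%:C)%C.
Proof.
have E : A `&` (fun y => (g y)%:C%C) @^-1` [set~ 0] = A `&` g @^-1` [set~ 0].
  apply/seteqP; split => y [Ay /= gy]; split => //.
    by move=> g0; apply: gy; rewrite g0.
  by move=> [g0]; apply: gy.
have FS : finite_support 0 A (fun y => (g y)%:C%C) = finite_support 0 A g.
  by rewrite /finite_support !unlock E.
by rewrite FS (raddf_sum (real_complex R)).
Qed.

Section PermSum.
Variables (G : topologicalType) (mul : G -> G -> G) (inv : G -> G) (e : G).
Hypothesis Hg : is_group mul inv e.
Local Notation "x ** y" := (mul x y) (at level 40, left associativity).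
Variables (H L : set G).
Hypotheses (sH : is_subgroup mul inv e H) (sL : is_subgroup mul inv e L).
Hypothesis LH : L `<=` H.
Variables (n : nat) (a : 'I_n -> G).
Hypothesis aH : forall i, H (a i).
Hypothesis acov : forall h, H h -> exists i, L (h ** inv (a i)).
Hypothesis adist : forall i j, L (a i ** inv (a j)) -> i = j.

Lemma psum_l (V : nmodType) (F : G -> V) h y : H h -> left_inv mul L F ->
  \sum_(i < n) F (a i ** (h ** y)) = \sum_(i < n) F (a i ** y).
Proof.
move=> Hh Fi; case: (perm_ex Hg sH sL aH acov adist Hh) => s sinj hs.
rewrite [RHS](reindex_inj sinj); apply: eq_bigr => i _.
have -> : a i ** (h ** y) = (a i ** h ** inv (a (s i))) ** (a (s i) ** y).
  by rewrite -!(gA Hg) (gKV Hg).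
exact: Fi.
Qed.

Lemma psum_r (V : nmodType) (F : G -> V) h y : H h ->
  (forall l z, L l -> F (z ** l) = F z) ->
  \sum_(j < n) F (y ** h ** inv (a j)) = \sum_(j < n) F (y ** inv (a j)).
Proof.
move=> Hh Fi; case: (perm_ex Hg sH sL aH acov adist (subV Hg sH Hh)) => s sinj hs.
rewrite [RHS](reindex_inj sinj); apply: eq_bigr => j _.
have -> : y ** h ** inv (a j) = (y ** inv (a (s j))) ** (a (s j) ** h ** inv (a j)).
  by rewrite -!(gA Hg) (gKV Hg).
apply: Fi; have := subV Hg sL (hs j).
by rewrite !(ginvM Hg) !(ginvK Hg) -!(gA Hg).
Qed.

End PermSum.

Lemma C_eq0 (R : realType) (r : R) : (((r%:C)%C : R[i]) == 0) = (r == 0).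
Proof. by apply/eqP/eqP => [[]|->]. Qed.

Section Down.
Variables (R : realType) (G : topologicalType) (mul : G -> G -> G) (inv : G -> G) (e : G).
Hypothesis Hg : is_group mul inv e.
Local Notation "x ** y" := (mul x y) (at level 40, left associativity).
Variables (H L : set G).
Hypotheses (sH : is_subgroup mul inv e H) (sL : is_subgroup mul inv e L).
Hypothesis LH : L `<=` H.
Variables (n : nat) (a : 'I_n -> G).
Hypothesis aH : forall i, H (a i).
Hypothesis acov : forall h, H h -> exists i, L (h ** inv (a i)).
Hypothesis adist : forall i j, L (a i ** inv (a j)) -> i = j.
Hypothesis hH : forall c, finite_index mul H (H `&` conjset mul inv c H).
Local Notation nc := (@Normc.normc R).
Local Notation repH := (coset_rep mul e H).
Local Notation repL := (coset_rep mul e L).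
Local Notation TrH := (Defs.transversal mul e H).
Local Notation TrL := (Defs.transversal mul e L).

Variable f : G -> R[i].
Hypothesis fli : left_inv mul L f.
Hypothesis fri : forall h x, L h -> f (x ** h) = f x.
Hypothesis ffin : finite_set (TrL `&` [set x | f x != 0]).

Definition Fr x := \sum_(i < n) \sum_(j < n) nc (f (a i ** x ** inv (a j))).

Lemma Fr_ge0 x : 0 <= Fr x.
Proof. by apply: sumr_ge0 => i _; apply: sumr_ge0 => j _; apply: nc_ge0. Qed.

Lemma Fr_l h x : H h -> Fr (h ** x) = Fr x.
Proof.
move=> Hh; rewrite /Fr.
apply: (psum_l Hg sH sL aH acov adist (F := fun z => \sum_(j < n) nc (f (z ** inv (a j))))) => //.
by move=> l z Ll; apply: eq_bigr => j _; rewrite -(gA Hg) fli.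
Qed.

Lemma Fr_r h x : H h -> Fr (x ** h) = Fr x.
Proof.
move=> Hh; rewrite /Fr; apply: eq_bigr => i _.
under eq_bigr do rewrite (gA Hg).
apply: (psum_r Hg sH sL aH acov adist (F := fun z => nc (f z))) => //.
by move=> l z Ll; rewrite fri.
Qed.

Lemma le_sum1 (m : nat) (u : 'I_m -> R) j : (forall i, 0 <= u i) -> u j <= \sum_(i < m) u i.
Proof.
move=> u0; rewrite (bigD1 j) //= lerDl; apply: sumr_ge0 => i _; exact: u0.
Qed.

Lemma f_le_Fr x : nc (f x) <= Fr x.
Proof.
case: (a0 Hg sH sL acov) => i0 Li0.
apply: le_trans (le_sum1 i0 _) => [|i]; last first.
  by apply: sumr_ge0 => j _; apply: nc_ge0.
apply: le_trans (le_sum1 i0 _) => [|j]; last exact: nc_ge0.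
by rewrite fri ?fli //; apply: (subV Hg sL).
Qed.

Lemma Fr_fin : finite_set (TrH `&` [set x | Fr x != 0]).
Proof.
apply: sub_finite_set (finite_image (fun p : G * 'I_n => repH (p.1 ** a p.2))
  (finite_setX ffin (@finite_finset _ [set: 'I_n]))).
move=> y [Ty Fy].
have [i [j nz]] : exists i j, f (a i ** y ** inv (a j)) != 0.
  apply: contrapT => Hn; move: Fy => /=; rewrite /Fr big1 ?eqxx // => i _.
  apply: big1 => j _; apply/eqP; rewrite nc_eq0; apply/negPn/negP => nz.
  by apply: Hn; exists i, j.
set w := repL (a i ** y ** inv (a j)).
exists (w, j); first by split => //; split; [apply: Tr_rep|rewrite /= /w (linv_rep Hg sL)].
rewrite /=; transitivity (repH y); last exact: (proj1 (TrP Hg sH y) Ty).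
apply: (rep_eq Hg sH); rewrite /w.
case: (rep_in Hg sL (a i ** y ** inv (a j))) => l0 Ll0 ->.
rewrite -!(gA Hg) (gKV Hg) (gxV Hg) (gx1 Hg).
exact: (subM Hg sH (LH Ll0) (aH i)).
Qed.

Definition FC x : R[i] := ((Fr x)%:C)%C.

Lemma FC_hecke : hecke_elem mul H FC.
Proof.
split.
- by move=> h x Hh; rewrite /FC Fr_l.
- by move=> h x Hh; rewrite /FC Fr_r.
- apply/(cosets_fin Hg sH (f := FC) 0); first by move=> h x Hh; rewrite /FC Fr_l.
  apply: sub_finite_set Fr_fin => x [Tx /=]; rewrite /FC C_eq0 => ?; by split.
Qed.

Variable xi : G -> R[i].
Hypothesis xili : left_inv mul L xi.

Definition Xr y := \sum_(i < n) nc (xi (a i ** y)).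

Lemma Xr_ge0 y : 0 <= Xr y.
Proof. by apply: sumr_ge0 => i _; apply: nc_ge0. Qed.

Lemma Xr_l h y : H h -> Xr (h ** y) = Xr y.
Proof.
move=> Hh; apply: (psum_l Hg sH sL aH acov adist (F := fun z => nc (xi z))) => //.
by move=> l z Ll; rewrite xili.
Qed.

Definition XC y : R[i] := ((Xr y)%:C)%C.

Definition P x := \sum_(y \in TrH) Fr (x ** inv y) * Xr y.

Lemma P_ge0 x : 0 <= P x.
Proof.
by apply: fsumr_ge0 => y _; apply: mulr_ge0; [apply: Fr_ge0|apply: Xr_ge0].
Qed.

Lemma P_l h x : H h -> P (h ** x) = P x.
Proof.
by move=> Hh; apply: eq_fsbigr => y _; rewrite -(gA Hg) Fr_l.
Qed.

Lemma hconvF x : hconv mul inv e H FC XC x = ((P x)%:C)%C.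
Proof.
rewrite /hconv (eq_fsbigr (fun y => ((Fr (x ** inv y) * Xr y)%:C)%C)).
  exact: fsum_C.
by move=> y _; rewrite /FC /XC rmorphM.
Qed.

Lemma Pfin x : finite_set (TrH `&` [set y | Fr (x ** inv y) * Xr y != 0]).
Proof.
have := hecke_fin Hg sH hH (f := Fr) (z0 := 0) _ Fr_fin x.
move=> /(_ (fun h z Hh => Fr_l z Hh)) fin.
apply: sub_finite_set fin => y [Ty /= nz]; split => //=.
by apply: contraNN nz => /eqP ->; rewrite mul0r.
Qed.

Lemma hconvL_le x : nc (hconv mul inv e L f xi x) <= P x.
Proof.
rewrite -lee_fin; apply: le_trans (nc_fsum_le _ _) _.
apply: le_trans (_ : _ <= \esum_(z in TrL) (Fr (x ** inv z) * nc (xi z))%:E)%E _.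
  apply: le_esum => z _; rewrite lee_fin Normc.normcM.
  by apply: ler_wpM2r; [apply: nc_ge0|apply: f_le_Fr].
rewrite (sumE_fiber Hg sH sL LH aH acov adist (g := fun z => (Fr (x ** inv z) * nc (xi z))%:E)); last 2 first.
- by move=> z; rewrite lee_fin; apply: mulr_ge0; [apply: Fr_ge0|apply: nc_ge0].
- move=> l z Ll; rewrite xili // (ginvM Hg) (gA Hg) Fr_r //.
  by apply: (subV Hg sH); apply: LH.
rewrite /P FE; last exact: Pfin.
  apply: le_esum => y _; rewrite sumEFin lee_fin /Xr mulr_sumr.
  apply: ler_sum => i _; rewrite (ginvM Hg) (gA Hg) Fr_r //.
  by apply: (subV Hg sH).
by move=> y _; apply: mulr_ge0; [apply: Fr_ge0|apply: Xr_ge0].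
Qed.

Lemma l2L_le : (l2sq mul e L (hconv mul inv e L f xi) <=
  \sum_(k < n) l2sq mul e H (hconv mul inv e H FC XC))%E.
Proof.
rewrite /l2sq.
apply: le_trans (_ : _ <= \esum_(z in TrL) ((P z) ^+ 2)%:E)%E _.
  apply: le_esum => z _; rewrite lee_fin !expr2.
  by apply: ler_pM; try apply: nc_ge0; apply: hconvL_le.
rewrite (sumE_fiber Hg sH sL LH aH acov adist (g := fun z => ((P z) ^+ 2)%:E)); last 2 first.
- by move=> z; rewrite lee_fin sqr_ge0.
- by move=> l z Ll; rewrite P_l //; apply: LH.
rewrite esum_sum; last by move=> y i _ _; rewrite lee_fin sqr_ge0.
apply: lee_sum => k _; apply: le_esum => y _.
by rewrite hconvF ncC ?P_ge0 // P_l.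
Qed.

Lemma XC_l : left_inv mul H XC.
Proof. by move=> h y Hh; rewrite /XC Xr_l. Qed.

Lemma l2X_le : (l2sq mul e H XC <= \sum_(k < n) l2sq mul e L xi)%E.
Proof.
rewrite /l2sq.
rewrite [X in (_ <= X)%E](_ : _ = \sum_(k < n) \esum_(y in TrH)
    \sum_(i < n) ((nc (xi (a i ** y))) ^+ 2)%:E); last first.
  apply: eq_bigr => k _.
  rewrite (sumE_fiber Hg sH sL LH aH acov adist (g := fun z => ((nc (xi z)) ^+ 2)%:E)) //.
    by move=> z; rewrite lee_fin sqr_ge0.
  by move=> l z Ll; rewrite xili.
rewrite -esum_sum; last first.
  by move=> y k _ _; apply: sume_ge0 => i _; rewrite lee_fin sqr_ge0.
apply: le_esum => y _.
rewrite /XC ncC ?Xr_ge0 //.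
rewrite (eq_bigr (fun k => (\sum_(i < n) nc (xi (a i ** y)) ^+ 2)%:E)); last first.
  by move=> k _; rewrite sumEFin.
rewrite sumEFin lee_fin sumr_const card_ord -mulr_natl.
exact: CS_sum.
Qed.

Lemma wn_le (l : G -> R) (s : R) : (forall x, 0 <= l x) ->
  (forall x y, l (x ** y) <= l x + l y) -> (forall h, H h -> l h = 0) ->
  weighted_norm mul e H l s FC ^+ 2 <= weighted_norm mul e L l s f ^+ 2 * n%:R ^+ 3.
Proof.
move=> l0 lsub lH.
pose W := fun x => powR (1 + l x) (2 * s).
have W0 x : 0 <= W x by apply: powR_ge0.
have Wl h x : H h -> W (h ** x) = W x by move=> Hh; rewrite /W (len_l Hg sH lsub lH).
have Wr h x : H h -> W (x ** h) = W x by move=> Hh; rewrite /W (len_r Hg sH lsub lH).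
pose q0 := fun z => nc (f z) ^+ 2 * W z.
have q00 z : 0 <= q0 z by apply: mulr_ge0 => //; apply: sqr_ge0.
have Ej j : (\esum_(y in TrH) \sum_(i < n) (q0 (a i ** y ** inv (a j)))%:E =
    (\sum_(x \in TrL) q0 x)%:E)%E.
  rewrite -(sumE_fiber Hg sH sL LH aH acov adist (g := fun z => (q0 (z ** inv (a j)))%:E)); last 2 first.
  - by move=> z; rewrite lee_fin.
  - move=> l1 z L1; rewrite /q0 -(gA Hg) fli // Wl //; exact: LH.
  rewrite (esum_rtrans Hg sL (g := fun z => (q0 z)%:E)); last 2 first.
  - by move=> z; rewrite lee_fin.
  - by move=> l1 z L1; rewrite /q0 fli // Wl //; exact: LH.
  rewrite FE //.
  apply: sub_finite_set ffin => x [Tx /= nz]; split => //=.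
  by apply: contraNN nz => /eqP f0; rewrite /q0 f0 Normc.normc0 expr0n /= mul0r.
have Fin : finite_set (TrH `&` [set x | nc (FC x) ^+ 2 * W x != 0]).
  apply: sub_finite_set Fr_fin => x [Tx /= nz]; split => //=.
  by apply: contraNN nz => /eqP F0; rewrite /FC F0 !expr0n /= addr0 sqrtr0 expr0n /= mul0r.
rewrite /weighted_norm !sqr_sqrtr; first last.
- by apply: fsumr_ge0 => x _; apply: mulr_ge0; [apply: sqr_ge0|apply: powR_ge0].
- by apply: fsumr_ge0 => x _; apply: mulr_ge0; [apply: sqr_ge0|apply: powR_ge0].
rewrite -lee_fin (FE (r := fun x => nc (FC x) ^+ 2 * W x)) //; last first.
  by move=> x _; apply: mulr_ge0 => //; apply: sqr_ge0.
apply: le_trans (_ : _ <= \esum_(y in TrH) \sum_(k < n * n) \sum_(j < n)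
   \sum_(i < n) (q0 (a i ** y ** inv (a j)))%:E)%E _.
  apply: le_esum => y _.
  under eq_bigr => k _ do under eq_bigr => j _ do rewrite sumEFin.
  under eq_bigr => k _ do rewrite sumEFin.
  rewrite sumEFin lee_fin sumr_const card_ord -mulr_natl /q0.
  under eq_bigr => j _ do under eq_bigr => i _ do rewrite (Wr _ _ (subV Hg sH (aH j))) (Wl _ _ (aH i)).
  rewrite exchange_big.
  rewrite (_ : \sum_(i < n) \sum_(j < n) _ =
     (\sum_(i < n) \sum_(j < n) nc (f (a i ** y ** inv (a j))) ^+ 2) * W y); last first.
    by rewrite mulr_suml; apply: eq_bigr => i _; rewrite mulr_suml.
  rewrite mulrA; apply: ler_wpM2r => //.
  rewrite /FC ncC ?Fr_ge0 // /Fr.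
  apply: le_trans (CS_sum _) _.
  rewrite natrM -mulrA ler_wpM2l //.
  by rewrite mulr_sumr; apply: ler_sum => i _; exact: CS_sum.
rewrite esum_sum; last first.
  by move=> y k _ _; apply: sume_ge0 => j _; apply: sume_ge0 => i _; rewrite lee_fin.
rewrite (eq_bigr (fun k : 'I_(n * n) => \sum_(j < n) (\sum_(x \in TrL) q0 x)%:E)); last first.
  move=> k _; rewrite esum_sum; last first.
    by move=> y j _ _; apply: sume_ge0 => i _; rewrite lee_fin.
  by apply: eq_bigr => j _; rewrite Ej.
under eq_bigr => k _ do rewrite sumEFin.
rewrite sumEFin lee_fin !sumr_const !card_ord -mulrnA -[_ *+ (n * (n * n))]mulr_natr !natrM.
by rewrite [n%:R ^+ 3]exprS expr2.
Qed.

Lemma down_ineq (l : G -> R) (s c : R) : (forall x, 0 <= l x) ->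
  (forall x y, l (x ** y) <= l x + l y) -> (forall h, H h -> l h = 0) -> 0 < c ->
  (forall F, hecke_elem mul H F -> forall X, in_l2 mul e H X ->
     (l2sq mul e H (hconv mul inv e H F X) <=
       ((c * weighted_norm mul e H l s F) ^+ 2)%:E * l2sq mul e H X)%E) ->
  (l2sq mul e L xi < +oo)%E ->
  (l2sq mul e L (hconv mul inv e L f xi) <=
     ((c * n%:R ^+ 3 * weighted_norm mul e L l s f) ^+ 2)%:E * l2sq mul e L xi)%E.
Proof.
move=> l0 lsub lH c0 RD xifin.
have npos : (0 < n)%N.
  by case: (a0 Hg sH sL acov) => i _; exact: (leq_ltn_trans (leq0n i) (ltn_ord i)).
have b0 : (0 <= l2sq mul e L xi)%E by apply: esum_ge0 => y _; rewrite lee_fin sqr_ge0.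
set b := fine (l2sq mul e L xi).
have Eb : l2sq mul e L xi = b%:E by rewrite /b fineK // ge0_fin_numE.
have bge0 : 0 <= b by rewrite -lee_fin -Eb.
have X1 : (l2sq mul e H XC <= (b *+ n)%:E)%E.
  by apply: le_trans l2X_le _; rewrite Eb sumEFin sumr_const card_ord.
have bX0 : (0 <= l2sq mul e H XC)%E by apply: esum_ge0 => y _; rewrite lee_fin sqr_ge0.
set bX := fine (l2sq mul e H XC).
have EbX : l2sq mul e H XC = bX%:E.
  by rewrite /bX fineK // ge0_fin_numE // (le_lt_trans X1) // ltry.
have bXle : bX <= b *+ n by rewrite -lee_fin -EbX.
have bX0' : 0 <= bX by rewrite -lee_fin -EbX.
have XCl2 : in_l2 mul e H XC by split; [exact: XC_l|rewrite EbX ltry].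
have K := RD FC FC_hecke XC XCl2; rewrite EbX -EFinM in K.
apply: le_trans l2L_le _.
apply: le_trans (_ : _ <= \sum_(k < n) ((c * weighted_norm mul e H l s FC) ^+ 2 * bX)%:E)%E _.
  by apply: lee_sum => k _.
rewrite sumEFin Eb -EFinM lee_fin sumr_const card_ord.
have W := @wn_le l s l0 lsub lH.
set wH := weighted_norm mul e H l s FC in W *.
set wL := weighted_norm mul e L l s f in W *.
set N : R := n%:R.
have N1 : 1 <= N by rewrite /N ler1n.
have N0 : 0 <= N by apply: le_trans N1.
rewrite -[_ *+ n]mulr_natr -/N.
have bN : bX <= b * N by rewrite /N mulr_natr.
apply: le_trans (_ : _ <= (c ^+ 2 * (wL ^+ 2 * N ^+ 3)) * (b * N) * N) _.
  rewrite exprMn; apply: ler_wpM2r => //.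
  apply: ler_pM => //; first by apply: mulr_ge0; [apply: sqr_ge0|apply: sqr_ge0].
  by apply: ler_wpM2l => //; apply: sqr_ge0.
rewrite (_ : (c * N ^+ 3 * wL) ^+ 2 * b = c ^+ 2 * (wL ^+ 2 * N ^+ 3) * (b * N) * N * N); last by ring.
apply: ler_peMr => //.
apply: mulr_ge0; last exact: N0.
apply: mulr_ge0; last by apply: mulr_ge0.
apply: mulr_ge0; first exact: sqr_ge0.
by apply: mulr_ge0; [apply: sqr_ge0|apply: exprn_ge0].
Qed.

End Down.

Lemma rmul_cont (G : topologicalType) (mul : G -> G -> G) (c : G) :
  continuous (fun p : G * G => mul p.1 p.2) -> continuous (fun z => mul z c).
Proof.
move=> hm z.
have h2 : (fun z => (z, c)) @ z --> (z, c).
  by apply: cvg_pair; [exact: cvg_id|exact: cvg_cst].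
exact: (cvg_comp _ _ h2 (hm (z, c))).
Qed.

Section UpLen.
Variables (R : realType) (G : topologicalType) (mul : G -> G -> G) (inv : G -> G) (e : G).
Hypothesis Hg : is_group mul inv e.
Local Notation "x ** y" := (mul x y) (at level 40, left associativity).
Variables (H L : set G).
Hypotheses (sH : is_subgroup mul inv e H) (sL : is_subgroup mul inv e L).
Hypothesis LH : L `<=` H.
Variables (n : nat) (a : 'I_n -> G).
Hypothesis aH : forall i, H (a i).
Hypothesis acov : forall h, H h -> exists i, L (h ** inv (a i)).
Hypothesis adist : forall i j, L (a i ** inv (a j)) -> i = j.
Variable l : G -> R.
Hypothesis l0 : forall x, 0 <= l x.
Hypothesis lsym : forall x, l x = l (inv x).
Hypothesis lsub : forall x y, l (x ** y) <= l x + l y.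
Hypothesis lL : forall h, L h -> l h = 0.

Definition lmax x := \big[Num.max/0]_(i < n) \big[Num.max/0]_(j < n) l (a i ** x ** inv (a j)).
Definition lp x := if pselect (H x) then 0 else lmax x.

Lemma lpH x : H x -> lp x = 0.
Proof. by rewrite /lp; case: pselect. Qed.
Lemma lpN x : ~ H x -> lp x = lmax x.
Proof. by rewrite /lp; case: pselect. Qed.

Lemma lmax_ge h x h' : H h -> H h' -> l (h ** x ** h') <= lmax x.
Proof.
move=> Hh Hh'.
case: (acov Hh) => i Li.
case: (acov (subV Hg sH Hh')) => j Lj.
have E : h ** x ** h' = (h ** inv (a i)) ** (a i ** x ** inv (a j)) ** (a j ** h').
  by rewrite -!(gA Hg) !(gKV Hg).
have Lj' : L (a j ** h').
  by have := subV Hg sL Lj; rewrite (ginvM Hg) !(ginvK Hg).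
rewrite E (len_r Hg sL lsub lL _ Lj') (len_l Hg sL lsub lL _ Li).
apply: le_trans (le_bigmax _ _ i).
exact: (le_bigmax _ (fun j => l (a i ** x ** inv (a j))) j).
Qed.

Lemma lmax_ge0 x : 0 <= lmax x.
Proof.
exact: le_trans (l0 _) (lmax_ge x (sub1 sH) (sub1 sH)).
Qed.

Lemma lp_ge0 x : 0 <= lp x.
Proof. by case: (pselect (H x)) => Hx; [rewrite lpH|rewrite lpN // ; apply: lmax_ge0]. Qed.

Lemma lmax_le x y : (forall h h', H h -> H h' -> l (h ** x ** h') <= y) -> 0 <= y -> lmax x <= y.
Proof.
move=> hb y0; apply: bigmax_le => // i _; apply: bigmax_le => // j _.
by apply: hb => //; apply: (subV Hg sH).
Qed.

Lemma lp_sym x : lp x = lp (inv x).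
Proof.
have HxE : H x <-> H (inv x).
  by split => [/(subV Hg sH)//|/(subV Hg sH)]; rewrite (ginvK Hg).
have key y : ~ H y -> lmax (inv y) <= lmax y.
  move=> nHy; apply: lmax_le; last exact: lmax_ge0.
  move=> h h' Hh Hh'; rewrite lsym !(ginvM Hg) !(ginvK Hg) (gA Hg).
  by apply: lmax_ge; apply: (subV Hg sH).
case: (pselect (H x)) => Hx.
  by rewrite !lpH //; apply/HxE.
have Hix : ~ H (inv x) by move/HxE.
rewrite !lpN //; apply/le_anti/andP; split; last exact: key.
by have := key _ Hix; rewrite (ginvK Hg).
Qed.

Lemma lp_sub x y : lp (x ** y) <= lp x + lp y.
Proof.
case: (pselect (H (x ** y))) => Hxy.
  by rewrite lpH // addr_ge0 // lp_ge0.
rewrite lpN //; apply: lmax_le; last by rewrite addr_ge0 // lp_ge0.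
move=> h h' Hh Hh'.
case: (pselect (H x)) => Hx.
  have nHy : ~ H y.
    by move=> Hy; apply: Hxy; apply: (subM Hg sH).
  rewrite (lpH Hx) add0r lpN // (gA Hg).
  by apply: lmax_ge => //; apply: (subM Hg sH).
case: (pselect (H y)) => Hy.
  rewrite (lpH Hy) addr0 lpN // -!(gA Hg) (gA Hg h x).
  by apply: lmax_ge => //; apply: (subM Hg sH).
rewrite !lpN //.
apply: le_trans (_ : l (h ** x ** e) + l (e ** y ** h') <= _).
  rewrite (gx1 Hg) (g1x Hg) -!(gA Hg) (gA Hg).
  exact: lsub.
by apply: lerD; apply: lmax_ge => //; apply: (sub1 sH).
Qed.

Lemma lp_l h x : H h -> lp (h ** x) = lp x.
Proof.
have key h0 y : H h0 -> ~ H y -> lmax (h0 ** y) <= lmax y.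
  move=> Hh0 nHy; apply: lmax_le; last exact: lmax_ge0.
  move=> h1 h' Hh1 Hh'; rewrite (gA Hg); apply: lmax_ge => //.
  exact: (subM Hg sH).
move=> Hh.
case: (pselect (H x)) => Hx.
  by rewrite !lpH //; apply: (subM Hg sH).
have nHhx : ~ H (h ** x).
  move=> Hhx; apply: Hx; have := subM Hg sH (subV Hg sH Hh) Hhx.
  by rewrite (gKV Hg).
rewrite !lpN //; apply/le_anti/andP; split; first exact: key.
by have := key _ _ (subV Hg sH Hh) nHhx; rewrite (gKV Hg).
Qed.

Lemma lmax_ge1 i y : l (a i ** y) <= lmax y.
Proof.
by have := lmax_ge y (aH i) (sub1 sH); rewrite (gx1 Hg).
Qed.

End UpLen.

Lemma linv_borel (R : realType) (G : topologicalType) (mul : G -> G -> G) (inv : G -> G) (e : G)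
  (Hg : is_group mul inv e) (H : set G) (sH : is_subgroup mul inv e H) (Hop : open H)
  (Hmul : continuous (fun p : G * G => mul p.1 p.2)) (g : G -> R) :
  left_inv mul H g -> forall B : set R, open B -> (<<s [set: G], @open G >>) (g @^-1` B).
Proof.
move=> gi B _.
apply: sub_gen_smallest.
have -> : g @^-1` B = \bigcup_(y in g @^-1` B) ((fun z => mul z (inv y)) @^-1` H).
  apply/seteqP; split => z.
    by move=> gz; exists z => //; rewrite /= (gxV Hg); exact: (sub1 sH).
  case=> y gy /= Hzy.
  have E : g z = g y by rewrite -[z](gVKr Hg z y) gi.
  by rewrite /preimage /= E.
apply: bigcup_open => y _; apply: open_comp => // w _.
exact: rmul_cont.
Qed.

Section Up.
Variables (R : realType) (G : topologicalType) (mul : G -> G -> G) (inv : G -> G) (e : G).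
Hypothesis Hg : is_group mul inv e.
Local Notation "x ** y" := (mul x y) (at level 40, left associativity).
Variables (H L : set G).
Hypotheses (sH : is_subgroup mul inv e H) (sL : is_subgroup mul inv e L).
Hypothesis LH : L `<=` H.
Variables (n : nat) (a : 'I_n -> G).
Hypothesis aH : forall i, H (a i).
Hypothesis acov : forall h, H h -> exists i, L (h ** inv (a i)).
Hypothesis adist : forall i j, L (a i ** inv (a j)) -> i = j.
Hypothesis hH : forall c, finite_index mul H (H `&` conjset mul inv c H).
Local Notation nc := (@Normc.normc R).
Local Notation repH := (coset_rep mul e H).
Local Notation repL := (coset_rep mul e L).
Local Notation TrH := (Defs.transversal mul e H).
Local Notation TrL := (Defs.transversal mul e L).

Variable f : G -> R[i].
Hypothesis fli : left_inv mul H f.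
Hypothesis fri : forall h x, H h -> f (x ** h) = f x.
Hypothesis ffin : finite_set (TrH `&` [set x | f x != 0]).
Variable xi : G -> R[i].
Hypothesis xili : left_inv mul H xi.

Lemma fL_fin : finite_set (TrL `&` [set x | f x != 0]).
Proof.
apply: sub_finite_set (finite_image (phi mul e L a)
  (finite_setX ffin (@finite_finset _ [set: 'I_n]))).
move=> z [Tz fz].
case: (phi_bij Hg sH sL LH aH acov adist) => _ _ /(_ z Tz) [[y i] [Ty _] pz].
exists (y, i) => //; split => //; split => //=.
move: fz; rewrite /= -pz /phi (linv_rep Hg sL) /=; last first.
  by move=> h x Lh; apply: fli; apply: LH.
by rewrite fli.
Qed.

Lemma fL_hecke : hecke_elem mul L f.
Proof.
split.
- by move=> h x Lh; apply: fli; apply: LH.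
- by move=> h x Lh; apply: fri; apply: LH.
- apply/(cosets_fin Hg sL (f := f) 0); last exact: fL_fin.
  by move=> h x Lh; apply: fli; apply: LH.
Qed.

Lemma hconvH_l : left_inv mul H (hconv mul inv e H f xi).
Proof.
by move=> h x Hh; apply: eq_fsbigr => y _; rewrite -(gA Hg) fli.
Qed.

Lemma hconv_lin x : hconv mul inv e L f xi x = (hconv mul inv e H f xi x) *+ n.
Proof.
pose g := fun z => f (x ** inv z) * xi z.
have gi : left_inv mul H g.
  move=> h z Hh; rewrite /g (ginvM Hg) (gA Hg) fri ?xili //.
  exact: (subV Hg sH).
have gL : left_inv mul L g by move=> h z Lh; apply: gi; apply: LH.
rewrite /hconv (reindex_fsbig (phi mul e L a) (TrH `*` [set: 'I_n]) TrL); last first.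
  exact: (phi_bij Hg sH sL LH aH acov adist).
rewrite (eq_fsbigr (fun p : G * 'I_n => g p.1)); last first.
  move=> [y i] _; rewrite /phi /=.
  by rewrite -/(g (repL (a i ** y))) (linv_rep Hg sL) // gi.
pose D := TrH `&` [set y | g y != 0].
have Dfin : finite_set D.
  apply: sub_finite_set (hecke_fin Hg sH hH fli ffin x) => y [Ty /= gy].
  split => //=; apply: contraNN gy; rewrite /g => /eqP ->; by rewrite mul0r.
have gD : forall y, TrH y -> ~ D y -> g y = 0.
  by move=> y Ty nD; apply/eqP; apply: contrapT => /negP gy; apply: nD.
rewrite -(fsbig_widen (D `*` [set: 'I_n]) (TrH `*` [set: 'I_n]) (fun p => g p.1)); last 2 first.
- by move=> [y i] [[Ty _] _].
- move=> [y i] [[Ty _] /= nD]; rewrite /preimage /=; apply: gD => // Dy.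
  by apply: nD.
rewrite -(pair_fsbig _ (fun y (i : 'I_n) => g y)) //; last exact: finite_finset.
under eq_fsbigr => y _ do rewrite fsbig_ordT sumr_const card_ord.
rewrite -(fsbig_widen D TrH g) //; last first.
  by move=> y [Ty nD]; apply: gD.
  by move=> y [].
rewrite !fsbig_finite //.
by rewrite sumrMnl.
Qed.

Lemma hconvL_l : left_inv mul L (hconv mul inv e L f xi).
Proof. by move=> h x Lh; rewrite !hconv_lin hconvH_l //; exact: LH. Qed.

Lemma npos_up : (0 < n)%N.
Proof.
by case: (a0 Hg sH sL acov) => i _; exact: (leq_ltn_trans (leq0n i) (ltn_ord i)).
Qed.

Lemma l2_H_le_L : (l2sq mul e H (hconv mul inv e H f xi) <=
   l2sq mul e L (hconv mul inv e L f xi))%E.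
Proof.
rewrite /l2sq (sumE_fiber Hg sH sL LH aH acov adist
  (g := fun z => (nc (hconv mul inv e L f xi z) ^+ 2)%:E)); last 2 first.
- by move=> z; rewrite lee_fin sqr_ge0.
- by move=> h z Lh; rewrite hconvL_l.
apply: le_esum => y _; rewrite sumEFin lee_fin.
case: (a0 Hg sH sL acov) => i0 _.
apply: le_trans (le_sum1 i0 _); last by move=> i; apply: sqr_ge0.
rewrite hconv_lin hconvH_l // normcMn !expr2.
set t := nc _.
have t0 : 0 <= t by apply: nc_ge0.
have tt : t <= t *+ n by rewrite -mulr_natr ler_peMr // ler1n npos_up.
by apply: ler_pM.
Qed.

Lemma l2xi : l2sq mul e L xi = \sum_(i < n) l2sq mul e H xi.
Proof.
rewrite /l2sq (sumE_fiber Hg sH sL LH aH acov adist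
  (g := fun z => (nc (xi z) ^+ 2)%:E)); last 2 first.
- by move=> z; rewrite lee_fin sqr_ge0.
- by move=> h z Lh; rewrite xili //; apply: LH.
rewrite esum_sum; last by move=> y i _ _; rewrite lee_fin sqr_ge0.
by apply: eq_bigr => i _; apply: eq_esum => y _; rewrite xili.
Qed.

Lemma wn_up (l : G -> R) (s : R) : (forall x, 0 <= l x) -> (forall x, l x = l (inv x)) ->
  (forall x y, l (x ** y) <= l x + l y) -> (forall h, L h -> l h = 0) -> 0 < s ->
  weighted_norm mul e L l s f ^+ 2 <=
  n%:R * powR (1 + \sum_(k < n) l (a k)) (2 * s) *
    weighted_norm mul e H (lp mul inv H a l) s f ^+ 2.
Proof.
move=> l0 lsym lsub lL s0.
set M := \sum_(k < n) l (a k).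
set lq := lp mul inv H a l.
have M0 : 0 <= M by apply: sumr_ge0.
have lq0 x : 0 <= lq x := lp_ge0 Hg sH sL acov l0 lsub lL x.
have Mb h : H h -> l h <= M.
  move=> Hh; case: (acov Hh) => k Lk.
  have -> : h = (h ** inv (a k)) ** a k by rewrite (gVKr Hg).
  rewrite (len_l Hg sL lsub lL _ Lk).
  by apply: (le_sum1 k (u := fun k => l (a k))).
have lb i y : l (a i ** y) <= M + lq y.
  case: (pselect (H y)) => Hy.
    apply: le_trans (Mb _ (subM Hg sH (aH i) Hy)) _; by rewrite lerDl.
  rewrite /lq (lpN mul inv a l Hy).
  apply: le_trans (lmax_ge1 Hg sH sL aH acov lsub lL i y) _; by rewrite lerDr.
have pw i y : powR (1 + l (a i ** y)) (2 * s) <=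
    powR (1 + M) (2 * s) * powR (1 + lq y) (2 * s).
  have h1 := l0 (a i ** y); have h2 := lq0 y; have h3 := lb i y.
  rewrite -powRM; [|lra|lra].
  apply: (ge0_ler_powR (r := 2 * s)); first by apply: mulr_ge0 => //; apply: ltW.
  - by rewrite nnegrE; lra.
  - by rewrite nnegrE; apply: mulr_ge0; lra.
  have h4 := mulr_ge0 M0 h2.
  by rewrite mulrDr mulr1 mulrDl mul1r; lra.
have Lfi : left_inv mul L f by move=> h x Lh; apply: fli; apply: LH.
rewrite /weighted_norm !sqr_sqrtr; first last.
- apply: fsumr_ge0 => x _; apply: mulr_ge0; [apply: sqr_ge0|apply: powR_ge0].
- apply: fsumr_ge0 => x _; apply: mulr_ge0; [apply: sqr_ge0|apply: powR_ge0].
rewrite -lee_fin FE; first last.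
- apply: sub_finite_set fL_fin => x [Tx /= nz]; split => //=.
  by apply: contraNN nz => /eqP f0; rewrite f0 Normc.normc0 expr0n /= mul0r.
- by move=> x _; apply: mulr_ge0; [apply: sqr_ge0|apply: powR_ge0].
rewrite (sumE_fiber Hg sH sL LH aH acov adist
  (g := fun z => (nc (f z) ^+ 2 * powR (1 + l z) (2 * s))%:E)); last 2 first.
- by move=> z; rewrite lee_fin; apply: mulr_ge0; [apply: sqr_ge0|apply: powR_ge0].
- by move=> h z Lh; rewrite Lfi // (len_l Hg sL lsub lL).
rewrite mulr_fsumr FE; first last.
- apply: sub_finite_set ffin => x [Tx /= nz]; split => //=.
  by apply: contraNN nz => /eqP f0; rewrite f0 Normc.normc0 expr0n /= mul0r mulr0.
- move=> x _; apply: mulr_ge0; first by apply: mulr_ge0 => //; apply: powR_ge0.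
  by apply: mulr_ge0; [apply: sqr_ge0|apply: powR_ge0].
apply: le_esum => y Ty; rewrite sumEFin lee_fin.
under eq_bigr => i _ do rewrite (fli _ (aH i)).
apply: le_trans (_ : _ <= \sum_(i < n) nc (f y) ^+ 2 *
    (powR (1 + M) (2 * s) * powR (1 + lq y) (2 * s))) _.
  by apply: ler_sum => i _; apply: ler_wpM2l; [apply: sqr_ge0|apply: pw].
rewrite sumr_const card_ord -[_ *+ n]mulr_natl.
by rewrite le_eqVlt; apply/orP; left; apply/eqP; ring.
Qed.

Lemma up_ineq (l : G -> R) (s c : R) : (forall x, 0 <= l x) -> (forall x, l x = l (inv x)) ->
  (forall x y, l (x ** y) <= l x + l y) -> (forall h, L h -> l h = 0) -> 0 < s -> 0 < c ->
  (forall F, hecke_elem mul L F -> forall X, in_l2 mul e L X ->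
     (l2sq mul e L (hconv mul inv e L F X) <=
       ((c * weighted_norm mul e L l s F) ^+ 2)%:E * l2sq mul e L X)%E) ->
  (l2sq mul e H xi < +oo)%E ->
  (l2sq mul e H (hconv mul inv e H f xi) <=
     ((c * n%:R * powR (1 + \sum_(k < n) l (a k)) s *
        weighted_norm mul e H (lp mul inv H a l) s f) ^+ 2)%:E * l2sq mul e H xi)%E.
Proof.
move=> l0 lsym lsub lL s0 c0 RD xifin.
have b0 : (0 <= l2sq mul e H xi)%E by apply: esum_ge0 => y _; rewrite lee_fin sqr_ge0.
set b := fine (l2sq mul e H xi).
have Eb : l2sq mul e H xi = b%:E by rewrite /b fineK // ge0_fin_numE.
have bge0 : 0 <= b by rewrite -lee_fin -Eb.
have EL : l2sq mul e L xi = (b *+ n)%:E by rewrite l2xi Eb sumEFin sumr_const card_ord.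
have xiL : in_l2 mul e L xi.
  by split; [move=> h x Lh; apply: xili; apply: LH|rewrite EL ltry].
have K := RD f fL_hecke xi xiL; rewrite EL -EFinM in K.
apply: le_trans l2_H_le_L _; apply: le_trans K _.
rewrite Eb -EFinM lee_fin.
have W := wn_up l0 lsym lsub lL s0.
set wL := weighted_norm mul e L l s f in W *.
set wH := weighted_norm mul e H (lp mul inv H a l) s f in W *.
set M := \sum_(k < n) l (a k) in W *.
have M0 : 0 <= M by apply: sumr_ge0.
set P := powR (1 + M) s.
have P2 : powR (1 + M) (2 * s) = P ^+ 2.
  rewrite expr2 -powRD; first by rewrite mulr_natl mulr2n.
  by apply/implyP => _; rewrite gt_eqF //; lra.
rewrite P2 in W.
rewrite -[_ *+ n]mulr_natr.
apply: le_trans (_ : _ <= c ^+ 2 * (n%:R * P ^+ 2 * wH ^+ 2) * (b * n%:R)) _.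
  rewrite exprMn; apply: ler_wpM2r; first by apply: mulr_ge0.
  by apply: ler_wpM2l => //; apply: sqr_ge0.
by rewrite le_eqVlt; apply/orP; left; apply/eqP; ring.
Qed.

End Up.

Lemma lcoset_eq (G : topologicalType) (mul : G -> G -> G) (inv : G -> G) (e : G)
  (Hg : is_group mul inv e) (S : set G) (sS : is_subgroup mul inv e S) x y :
  S (mul (inv x) y) -> lcoset mul x S = lcoset mul y S.
Proof.
move=> Sxy; apply/seteqP; split=> z [k Sk <-].
  exists (mul (inv (mul (inv x) y)) k); first by apply: (subM Hg sS) => //; apply: (subV Hg sS).
  by rewrite (ginvM Hg) (ginvK Hg) -!(gA Hg) (gVK Hg).
exists (mul (mul (inv x) y) k); first exact: (subM Hg sS).
by rewrite -!(gA Hg) (gVK Hg).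
Qed.

Lemma reps_of (G : topologicalType) (mul : G -> G -> G) (inv : G -> G) (e : G)
  (Hg : is_group mul inv e) (H L : set G) (sH : is_subgroup mul inv e H)
  (sL : is_subgroup mul inv e L) :
  finite_index mul H L ->
  exists n (a : 'I_n -> G), [/\ forall i, H (a i),
     forall h, H h -> exists i, L (mul h (inv (a i))) &
     forall i j, L (mul (a i) (inv (a j))) -> i = j].
Proof.
move=> fin.
set S := [set lcoset mul b L | b in H] in fin.
set s := finmap.enum_fset (fset_set S).
have us : uniq s by apply: finmap.fset_uniq.
have memS C : (C \in s) = (C \in S) by rewrite in_fset_set.
pose C (i : 'I_(size s)) := nth set0 s i.
have CS i : S (C i).
  have : C i \in s by apply: mem_nth.
  by rewrite memS inE.
have ex i : exists b, H b /\ lcoset mul b L = C i.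
  by case: (CS i) => b Hb Eb; exists b.
case: (boolp.choice ex) => bb hb.
exists (size s), (fun i => inv (bb i)); split.
- by move=> i; apply: (subV Hg sH); case: (hb i).
- move=> h Hh.
  have Sh : S (lcoset mul (inv h) L) by exists (inv h) => //; apply: (subV Hg sH).
  have ins : lcoset mul (inv h) L \in s by rewrite memS inE.
  have ilt : (index (lcoset mul (inv h) L) s < size s)%N by rewrite index_mem.
  pose i := Ordinal ilt.
  exists i.
  have Ci : C i = lcoset mul (inv h) L by rewrite /C nth_index.
  case: (hb i) => _; rewrite Ci => Ebi.
  have : lcoset mul (inv h) L (inv h) by exists e; [apply: (sub1 sL)|rewrite (gx1 Hg)].
  rewrite -Ebi; case=> k Lk Ek.
  rewrite (ginvK Hg).
  have -> : h = mul (inv k) (inv (bb i)) by rewrite -(ginvM Hg) Ek (ginvK Hg).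
  rewrite -(gA Hg) (gVx Hg) (gx1 Hg).
  exact: (subV Hg sL).
- move=> i j Lij.
  have : C i = C j.
    case: (hb i) => _ <-; case: (hb j) => _ <-.
    by apply: (lcoset_eq Hg sL); move: Lij; rewrite (ginvK Hg).
  by move/eqP; rewrite /C nth_uniq // => /eqP /val_inj.
Qed.

Lemma RD_down_top (R : realType) (G : topologicalType) (mul : G -> G -> G) (inv : G -> G) (e : G)
  (Hg : is_group mul inv e) (H L : set G) (sH : is_subgroup mul inv e H)
  (sL : is_subgroup mul inv e L) (LH : L `<=` H) (n : nat) (a : 'I_n -> G)
  (aH : forall i, H (a i)) (acov : forall h, H h -> exists i, L (mul h (inv (a i))))
  (adist : forall i j, L (mul (a i) (inv (a j))) -> i = j)
  (hH : forall c, finite_index mul H (H `&` conjset mul inv c H)) :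
  property_RD R mul inv e H -> property_RD R mul inv e L.
Proof.
case=> l [[[l0 le0] lsym lsub lH lborel] [s [c [s0 [c0 RD]]]]].
have npos : (0 < n)%N.
  by case: (a0 Hg sH sL acov) => i _; exact: (leq_ltn_trans (leq0n i) (ltn_ord i)).
exists l; split.
  by split => // h Lh; apply: lH; apply: LH.
exists s, (c * n%:R ^+ 3); split => //; split.
  by apply: mulr_gt0 => //; apply: exprn_gt0; rewrite ltr0n.
move=> f [fli fri ffin] xi [xili xifin].
have ffin' := (cosets_fin Hg sL 0 fli).1 ffin.
exact: (down_ineq Hg sH sL LH aH acov adist hH fli fri ffin' xili l0 lsub lH c0 RD xifin).
Qed.

Lemma RD_up_top (R : realType) (G : topologicalType) (mul : G -> G -> G) (inv : G -> G) (e : G)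
  (Hg : is_group mul inv e) (H L : set G) (sH : is_subgroup mul inv e H)
  (sL : is_subgroup mul inv e L) (LH : L `<=` H) (n : nat) (a : 'I_n -> G)
  (aH : forall i, H (a i)) (acov : forall h, H h -> exists i, L (mul h (inv (a i))))
  (adist : forall i j, L (mul (a i) (inv (a j))) -> i = j)
  (hH : forall c, finite_index mul H (H `&` conjset mul inv c H))
  (Hmul : continuous (fun p : G * G => mul p.1 p.2)) (Hop : open H) :
  property_RD R mul inv e L -> property_RD R mul inv e H.
Proof.
case=> l [[[l0 le0] lsym lsub lL lborel] [s [c [s0 [c0 RD]]]]].
have npos : (0 < n)%N.
  by case: (a0 Hg sH sL acov) => i _; exact: (leq_ltn_trans (leq0n i) (ltn_ord i)).
exists (lp mul inv H a l); split.
  split.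
  - split; first exact: (lp_ge0 Hg sH sL acov l0 lsub lL).
    exact: (lpH mul inv a l (sub1 sH)).
  - exact: (lp_sym Hg sH sL aH acov l0 lsym lsub lL).
  - exact: (lp_sub Hg sH sL aH acov l0 lsub lL).
  - by move=> h Hh; apply: (lpH mul inv a l Hh).
  - apply: (linv_borel Hg sH Hop Hmul) => h x Hh.
    exact: (lp_l Hg sH sL aH acov l0 lsub lL x Hh).
have M0 : 0 <= \sum_(k < n) l (a k) by apply: sumr_ge0.
exists s, (c * n%:R * powR (1 + \sum_(k < n) l (a k)) s); split => //; split.
  apply: mulr_gt0; first by apply: mulr_gt0 => //; rewrite ltr0n.
  by apply: powR_gt0; lra.
move=> f [fli fri ffin] xi [xili xifin].
have ffin' := (cosets_fin Hg sH 0 fli).1 ffin.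
exact: (up_ineq Hg sH sL LH aH acov adist hH fli fri ffin' xili l0 lsym lsub lL s0 c0 RD xifin).
Qed.

Unset Implicit Arguments.

Theorem corollary2p13 (R : realType) (G : topologicalType)
    (mul : G -> G -> G) (inv : G -> G) (e : G) (H K : set G) :
  is_topological_group mul inv e ->
  open H -> open K ->
  hecke_subgroup mul inv e H -> hecke_subgroup mul inv e K ->
  commensurable mul H K ->
  (property_RD R mul inv e H <-> property_RD R mul inv e K).
Proof.
move=> [Hg Hmul _] Hop Kop [sH hH] [sK hK] [fH fK].
have sL : is_subgroup mul inv e (H `&` K).
  split; first by split; [apply: (sub1 sH)|apply: (sub1 sK)].
  by move=> x y [Hx Kx] [Hy Ky]; split; [apply: (subMV Hg sH)|apply: (subMV Hg sK)].
have LH : H `&` K `<=` H by move=> x [].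
have LK : H `&` K `<=` K by move=> x [].
case: (reps_of Hg sH sL fH) => n [a [aH acov adist]].
case: (reps_of Hg sK sL fK) => m [b [bK bcov bdist]].
split => RD.
  exact: (RD_up_top Hg sK sL LK bK bcov bdist hK Hmul Kop
    (RD_down_top Hg sH sL LH aH acov adist hH RD)).
exact: (RD_up_top Hg sH sL LH aH acov adist hH Hmul Hop
  (RD_down_top Hg sK sL LK bK bcov bdist hK RD)).
Qed.
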